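(* Let $G=(V,q)$ be a reversible, stochastically complete graph with heat semigroup $P_t$, and let $\widetilde G=(V\times V,\widetilde q)$ be a coupling graph of $G$ with heat semigroup $\widetilde P_t$. Then for all $f\in\ell_\infty(V)$ and $t\ge0$, \[ \widetilde P_t(1\otimes f)=1\otimes P_tf\qquad\text{and}\qquad \widetilde P_t(f\otimes 1)=P_tf\otimes 1. \]
   Context: A graph $G=(V,q)$ consists of a countable set $V$ and a function $q:V\times V\to[0,\infty)$ such that $\#\{y:q(x,y)>0\}<\infty$ for every $x\in V$; its Laplacian is $\Delta f(x)=\sum_y q(x,y)(f(y)-f(x))$. $G$ is reversible if there is $m:V\to(0,\infty)$ with $q(x,y)m(x)=q(y,x)m(y)$. $\ell_\infty(V)$ is the space of bounded real functions. Heat semigroup of any graph: for finite $S\subset V$ let $q_S(x,y)=q(x,y)1_S(x)$ with Laplacian $\Delta_S$, and $P^S_tf:=\sum_{k\ge0}\frac{t^k\Delta_S^k(f1_S)}{k!}$; for $f\in\ell_\infty(V)$, $P_tf:=\lim_{i}P_t^{S_i}f$ pointwise along any increasing exhaustion of $V$ by finite sets $S_i$ (the limit exists and is independent of the exhaustion). $G$ is stochastically complete if $P_t1=1$ for all $t\ge0$. $(f\otimes g)(x,y)=f(x)g(y)$. A graph $\widetilde G=(V\times V,\widetilde q)$ with Laplacian $\widetilde\Delta$ is a coupling graph of $G$ if $\widetilde\Delta(f\otimes 1)=\Delta f\otimes 1$ and $\widetilde\Delta(1\otimes f)=1\otimes\Delta f$ for all $f:V\to\mathbb R$. *)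

(* Defs.v *)
From Stdlib Require Import Reals List Classical ClassicalEpsilon.
Import ListNotations.
From Stdlib Require Import Factorial.
Open Scope R_scope.

Definition countable (V : Type) : Prop :=
  exists enc : V -> nat, forall x y, enc x = enc y -> x = y.

Definition is_graph {V : Type} (q : V -> V -> R) : Prop :=
  (forall x y, 0 <= q x y) /\
  (forall x, exists l : list V, forall y, q x y > 0 -> In y l).

(* Sum of a finitely supported function; 0 if the support is not finite
   (never used in that case). Independent of the chosen duplicate-free
   covering list. *)
Definition fsum {V : Type} (g : V -> R) : R :=
  match excluded_middle_informative
          (exists l : list V, NoDup l /\ forall y, g y <> 0 -> In y l) with
  | left H =>
      let l := proj1_sig (constructive_indefinite_description _ H) in
      fold_right Rplus 0 (map g l)
  | right _ => 0
  end.

Definition lap {V : Type} (q : V -> V -> R) (f : V -> R) : V -> R :=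
  fun x => fsum (fun y => q x y * (f y - f x)).

Definition reversible {V : Type} (q : V -> V -> R) : Prop :=
  exists m : V -> R, (forall x, 0 < m x) /\ (forall x y, q x y * m x = q y x * m y).

Definition bounded_fun {V : Type} (f : V -> R) : Prop :=
  exists M, forall x, Rabs (f x) <= M.

Definition ind {V : Type} (S : list V) (x : V) : R :=
  if excluded_middle_informative (In x S) then 1 else 0.

Definition qrestr {V : Type} (q : V -> V -> R) (S : list V) : V -> V -> R :=
  fun x y => q x y * ind S x.

Definition PS_term {V : Type} (q : V -> V -> R) (S : list V) (t : R)
  (f : V -> R) (x : V) (k : nat) : R :=
  t ^ k * Nat.iter k (lap (qrestr q S)) (fun y => f y * ind S y) x / INR (fact k).

Definition PS {V : Type} (q : V -> V -> R) (S : list V) (t : R) (f : V -> R) : V -> R :=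
  fun x =>
    match excluded_middle_informative
            (exists l, Un_cv (fun N => sum_f_R0 (PS_term q S t f x) N) l) with
    | left H => proj1_sig (constructive_indefinite_description _ H)
    | right _ => 0
    end.

Definition exhaustion {V : Type} (S : nat -> list V) : Prop :=
  (forall i x, In x (S i) -> In x (S (Datatypes.S i))) /\
  (forall x, exists i, In x (S i)).

(* P_t f (x) := lim_i P^{S_i}_t f (x), the common limit along every
   increasing exhaustion (exists and is exhaustion independent). *)
Definition Pt {V : Type} (q : V -> V -> R) (t : R) (f : V -> R) : V -> R :=
  fun x =>
    match excluded_middle_informative
            (exists l, forall S, exhaustion S ->
               Un_cv (fun i => PS q (S i) t f x) l) with
    | left H => proj1_sig (constructive_indefinite_description _ H)
    | right _ => 0
    end.

Definition stoch_complete {V : Type} (q : V -> V -> R) : Prop :=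
  forall t, 0 <= t -> Pt q t (fun _ => 1) = (fun _ => 1).

Definition tensor {V : Type} (f g : V -> R) : V * V -> R :=
  fun p => f (fst p) * g (snd p).

Definition coupling_graph {V : Type} (q : V -> V -> R)
  (qt : V * V -> V * V -> R) : Prop :=
  is_graph qt /\
  (forall f : V -> R, lap qt (tensor f (fun _ => 1)) = tensor (lap q f) (fun _ => 1)) /\
  (forall f : V -> R, lap qt (tensor (fun _ => 1) f) = tensor (fun _ => 1) (lap q f)).

(* Main.v *)
Require Import Defs.
From Stdlib Require Import Reals List Classical ClassicalEpsilon Permutation Lra Lia FunctionalExtensionality Factorial.
Import ListNotations.
Import Defs.
Open Scope R_scope.


Definition lsum {W : Type} (l : list W) (g : W -> R) : R := fold_right Rplus 0 (map g l).

Lemma lsum_nil {W} (g : W -> R) : lsum [] g = 0. Proof. reflexivity. Qed.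
Lemma lsum_cons {W} (a : W) l g : lsum (a :: l) g = g a + lsum l g. Proof. reflexivity. Qed.

Lemma lsum_app {W} (l1 l2 : list W) g : lsum (l1 ++ l2) g = lsum l1 g + lsum l2 g.
Proof. induction l1; simpl. unfold lsum; simpl; ring. unfold lsum in *; simpl; rewrite IHl1; ring. Qed.

Lemma lsum_perm {W} (l1 l2 : list W) g : Permutation l1 l2 -> lsum l1 g = lsum l2 g.
Proof. induction 1; unfold lsum in *; simpl in *; try lra. Qed.

Lemma lsum_zero {W} (l : list W) g : (forall y, In y l -> g y = 0) -> lsum l g = 0.
Proof. induction l; intros H; unfold lsum in *; simpl in *; [reflexivity|].
  rewrite H by auto; rewrite IHl by auto; ring. Qed.

Lemma lsum_ext {W} (l : list W) g h : (forall y, In y l -> g y = h y) -> lsum l g = lsum l h.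
Proof. induction l; intros H; unfold lsum in *; simpl in *; [reflexivity|].
  rewrite H by auto; rewrite IHl by auto; ring. Qed.

Lemma lsum_plus {W} (l : list W) g h : lsum l (fun y => g y + h y) = lsum l g + lsum l h.
Proof. induction l; unfold lsum in *; simpl in *; try lra. Qed.

Lemma lsum_scal {W} (l : list W) a g : lsum l (fun y => a * g y) = a * lsum l g.
Proof. induction l; unfold lsum in *; simpl in *; try lra; rewrite IHl; ring. Qed.

Lemma lsum_le {W} (l : list W) g h : (forall y, In y l -> g y <= h y) -> lsum l g <= lsum l h.
Proof. induction l; intros H; unfold lsum in *; simpl in *; try lra.
  apply Rplus_le_compat; auto. Qed.

Lemma lsum_abs {W} (l : list W) g : Rabs (lsum l g) <= lsum l (fun y => Rabs (g y)).
Proof. induction l; unfold lsum in *; simpl in *. rewrite Rabs_R0; lra.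
  eapply Rle_trans. apply Rabs_triang. lra. Qed.

Definition notin_dec {W} (l : list W) (y : W) : bool :=
  if excluded_middle_informative (In y l) then false else true.

Lemma lsum_cover_half {W} (l1 l2 : list W) g :
  (forall y, g y <> 0 -> In y l1) ->
  lsum (l1 ++ filter (notin_dec l1) l2) g = lsum l1 g.
Proof.
  intros H. rewrite lsum_app. rewrite (lsum_zero (filter _ _)). ring.
  intros y Hy. apply filter_In in Hy. destruct Hy as [_ Hy]. unfold notin_dec in Hy.
  destruct (excluded_middle_informative (In y l1)); try discriminate.
  destruct (Req_dec (g y) 0); auto. exfalso; auto.
Qed.

Lemma NoDup_half {W} (l1 l2 : list W) : NoDup l1 -> NoDup l2 -> NoDup (l1 ++ filter (notin_dec l1) l2).
Proof.
  intros H1 H2. apply NoDup_app; auto. apply NoDup_filter; auto.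
  intros a Ha Hb. apply filter_In in Hb. destruct Hb as [_ Hb]. unfold notin_dec in Hb.
  destruct (excluded_middle_informative (In a l1)); try discriminate. auto.
Qed.

Lemma In_half {W} (l1 l2 : list W) y : In y (l1 ++ filter (notin_dec l1) l2) <-> In y l1 \/ In y l2.
Proof.
  rewrite in_app_iff, filter_In. unfold notin_dec.
  destruct (excluded_middle_informative (In y l1)); intuition.
Qed.

Lemma lsum_cover_eq {W} (l1 l2 : list W) g : NoDup l1 -> NoDup l2 ->
  (forall y, g y <> 0 -> In y l1) -> (forall y, g y <> 0 -> In y l2) ->
  lsum l1 g = lsum l2 g.
Proof.
  intros N1 N2 C1 C2.
  rewrite <- (lsum_cover_half l1 l2 g C1), <- (lsum_cover_half l2 l1 g C2).
  apply lsum_perm. apply NoDup_Permutation; try apply NoDup_half; auto.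
  intros y. rewrite !In_half. tauto.
Qed.

Lemma fsum_eq {W} (l : list W) g : NoDup l -> (forall y, g y <> 0 -> In y l) -> fsum g = lsum l g.
Proof.
  intros N C. unfold fsum.
  destruct (excluded_middle_informative _) as [H|H].
  - destruct (constructive_indefinite_description _ H) as [l0 [N0 C0]]. simpl.
    apply (lsum_cover_eq l0 l g); auto.
  - exfalso; apply H; eauto.
Qed.

Lemma nbr_ex {W} (q : W -> W -> R) : is_graph q -> forall x,
  exists l, NoDup l /\ forall y, q x y <> 0 -> In y l.
Proof.
  intros [Hpos Hfin] x. destruct (Hfin x) as [l0 Hl0].
  exists (nodup (fun a b => excluded_middle_informative (a = b)) l0). split.
  apply NoDup_nodup. intros y Hy. apply nodup_In. apply Hl0.
  specialize (Hpos x y). lra.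
Qed.

Lemma fsum_q {W} (q : W -> W -> R) (l : list W) x g :
  (forall y, q x y <> 0 -> In y l) -> NoDup l ->
  fsum (fun y => q x y * g y) = lsum l (fun y => q x y * g y).
Proof.
  intros C N. apply fsum_eq; auto. intros y Hy. apply C. intro E. apply Hy. rewrite E; ring.
Qed.

Lemma fsum_q1 {W} (q : W -> W -> R) (l : list W) x :
  (forall y, q x y <> 0 -> In y l) -> NoDup l -> fsum (q x) = lsum l (q x).
Proof. intros C N. apply fsum_eq; auto. Qed.


Lemma C_n0 n : C n 0 = 1.
Proof. unfold C. rewrite Nat.sub_0_r. simpl. field. apply INR_fact_neq_0. Qed.
Lemma C_nn n : C n n = 1.
Proof. unfold C. rewrite Nat.sub_diag. simpl. field. apply INR_fact_neq_0. Qed.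

Lemma sum_scal_l (F : nat -> R) a n : sum_f_R0 (fun i => a * F i) n = a * sum_f_R0 F n.
Proof. induction n; simpl; try rewrite IHn; ring. Qed.

Lemma pascal_sum (u : nat -> R) y k :
 sum_f_R0 (fun j => C k j * y^(k-j) * u (S j)) k + y * sum_f_R0 (fun j => C k j * y^(k-j) * u j) k
 = sum_f_R0 (fun j => C (S k) j * y^(S k - j) * u j) (S k).
Proof.
  rewrite (decomp_sum _ (S k)) by lia. simpl pred.
  destruct k as [|m].
  - simpl. rewrite !C_n0, C_nn. ring.
  - rewrite (decomp_sum (fun j => C (S m) j * y ^ (S m - j) * u j)) by lia. simpl pred.
    rewrite tech5. rewrite (tech5 (fun i => C (S (S m)) (S i) * y ^ (S (S m) - S i) * u (S i))).
    rewrite !C_n0, !C_nn.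
    replace (sum_f_R0 (fun i => C (S (S m)) (S i) * y ^ (S (S m) - S i) * u (S i)) m)
      with (sum_f_R0 (fun i => C (S m) i * y ^ (S m - i) * u (S i)) m +
            sum_f_R0 (fun i => y * (C (S m) (S i) * y ^ (S m - S i) * u (S i))) m).
    2:{ rewrite <- plus_sum. apply sum_eq. intros i Hi.
        rewrite <- (pascal (S m) i) by lia. replace (S (S m) - S i)%nat with (S m - i)%nat by lia.
        replace (S m - i)%nat with (S (S m - S i))%nat by lia. simpl. ring. }
    rewrite sum_scal_l. rewrite !Nat.sub_diag, !Nat.sub_0_r. simpl. ring.
Qed.

Lemma ind_cases {W} (L : list W) x : (ind L x = 1 /\ In x L) \/ (ind L x = 0 /\ ~ In x L).
Proof. unfold ind. destruct (excluded_middle_informative (In x L)); auto. Qed.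

Definition Kop {W} (q : W -> W -> R) (L : list W) (c : R) (g : W -> R) (x : W) : R :=
  ind L x * (fsum (fun y => q x y * g y) + (c - fsum (q x)) * g x).

Definition Kp {W} (q : W -> W -> R) (L : list W) (c : R) (g : W -> R) (j : nat) : W -> R :=
  Nat.iter j (Kop q L c) g.

Lemma Kp_S {W} (q : W -> W -> R) L c g j : Kp q L c g (S j) = Kop q L c (Kp q L c g j).
Proof. reflexivity. Qed.

Lemma lsum_lin2 {W} (l : list W) a b g h :
  lsum l (fun y => a * g y + b * h y) = a * lsum l g + b * lsum l h.
Proof. rewrite lsum_plus, !lsum_scal. ring. Qed.

Section G.
Context {W : Type} (q : W -> W -> R) (Hg : is_graph q).

Lemma lap_expand g x : lap q g x = fsum (fun y => q x y * g y) - fsum (q x) * g x.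
Proof.
  destruct (nbr_ex q Hg x) as [l [N C]]. unfold lap.
  rewrite (fsum_q q l x (fun y => g y - g x)), (fsum_q q l x g), (fsum_q1 q l x); auto.
  replace (lsum l (fun y => q x y * g y) - lsum l (q x) * g x) with
    (1 * lsum l (fun y => q x y * g y) + (- g x) * lsum l (q x)) by ring.
  rewrite <- lsum_lin2. apply lsum_ext; intros; ring.
Qed.

Lemma lap_restr L c g x : lap (qrestr q L) g x = Kop q L c g x - c * ind L x * g x.
Proof.
  destruct (nbr_ex q Hg x) as [l [N C]]. unfold lap, qrestr, Kop.
  rewrite (fsum_eq l (fun y => q x y * ind L x * (g y - g x))); auto.
  2:{ intros y Hy. apply C. intro E. apply Hy. rewrite E; ring. }
  rewrite (fsum_q q l x g), (fsum_q1 q l x); auto.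
  replace (ind L x * (lsum l (fun y => q x y * g y) + (c - lsum l (q x)) * g x) - c * ind L x * g x)
    with (ind L x * lsum l (fun y => q x y * g y) + - ind L x * g x * lsum l (q x)) by ring.
  rewrite <- lsum_lin2. apply lsum_ext; intros; ring.
Qed.

Lemma Klin L c a b g h x :
  Kop q L c (fun y => a * g y + b * h y) x = a * Kop q L c g x + b * Kop q L c h x.
Proof.
  destruct (nbr_ex q Hg x) as [l [N C]]. unfold Kop.
  rewrite !(fsum_q q l x); auto.
  replace (lsum l (fun y => q x y * (a * g y + b * h y))) with
    (lsum l (fun y => a * (q x y * g y) + b * (q x y * h y))) by (apply lsum_ext; intros; ring).
  rewrite lsum_lin2. ring.
Qed.

Lemma Kop_ext L c g h x : (forall y, g y = h y) -> Kop q L c g x = Kop q L c h x.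
Proof. intros H. f_equal. apply functional_extensionality; auto. Qed.

Lemma Kop_sum L c (F : nat -> W -> R) n x :
  Kop q L c (fun y => sum_f_R0 (fun i => F i y) n) x = sum_f_R0 (fun i => Kop q L c (F i) x) n.
Proof.
  revert x; induction n; intros x; simpl.
  - reflexivity.
  - rewrite <- IHn.
    rewrite (Kop_ext L c _ (fun y => 1 * sum_f_R0 (fun i => F i y) n + 1 * F (S n) y)) by (intros; ring).
    rewrite Klin. ring.
Qed.

Lemma Kop_scal L c a g x : Kop q L c (fun y => a * g y) x = a * Kop q L c g x.
Proof.
  rewrite (Kop_ext L c _ (fun y => a * g y + 0 * g y)) by (intros; ring).
  rewrite Klin. ring.
Qed.

Lemma Kp_lin L c a b g h j x :
  Kp q L c (fun y => a * g y + b * h y) j x = a * Kp q L c g j x + b * Kp q L c h j x.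
Proof.
  revert x; induction j; intros x; [reflexivity|].
  rewrite !Kp_S. rewrite (Kop_ext L c _ (fun y => a * Kp q L c g j y + b * Kp q L c h j y)) by auto.
  apply Klin.
Qed.

Lemma Kop_out L c g x : ~ In x L -> Kop q L c g x = 0.
Proof. intros H. unfold Kop. destruct (ind_cases L x) as [[E F]|[E F]]; [tauto|]. rewrite E; ring. Qed.

Definition Dk L (h0 : W -> R) k := Nat.iter k (lap (qrestr q L)) h0.

Lemma Dk_S L h0 k : Dk L h0 (S k) = lap (qrestr q L) (Dk L h0 k).
Proof. reflexivity. Qed.

Lemma Dk_supp L h0 : (forall x, ~ In x L -> h0 x = 0) -> forall k x, ~ In x L -> Dk L h0 k x = 0.
Proof.
  intros H k x Hx. destruct k; [simpl; auto|].
  rewrite Dk_S. rewrite (lap_restr L 0).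
  rewrite Kop_out by auto. destruct (ind_cases L x) as [[E F]|[E F]]; [tauto|]. rewrite E; ring.
Qed.

Lemma Dk_binom L c h0 : (forall x, ~ In x L -> h0 x = 0) -> forall k x,
  Dk L h0 k x = sum_f_R0 (fun j => C k j * (-c)^(k-j) * Kp q L c h0 j x) k.
Proof.
  intros H0 k. induction k; intros x.
  - simpl. rewrite C_n0. ring.
  - rewrite Dk_S. rewrite (lap_restr L c).
    rewrite (Kop_ext L c _ (fun y => sum_f_R0 (fun j => C k j * (-c)^(k-j) * Kp q L c h0 j y) k)) by auto.
    rewrite Kop_sum.
    replace (sum_f_R0 (fun i => Kop q L c (fun y => C k i * (- c) ^ (k - i) * Kp q L c h0 i y) x) k)
      with (sum_f_R0 (fun j => C k j * (-c)^(k-j) * Kp q L c h0 (S j) x) k).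
    2:{ apply sum_eq; intros i _. rewrite Kop_scal. rewrite Kp_S. ring. }
    replace (c * ind L x * Dk L h0 k x) with (c * Dk L h0 k x).
    2:{ destruct (ind_cases L x) as [[E F]|[E F]]. rewrite E; ring. rewrite Dk_supp; auto. ring. }
    rewrite IHk. rewrite <- (pascal_sum (fun j => Kp q L c h0 j x) (-c) k). ring.
Qed.

End G.

Definition hL {W} (f : W -> R) (L : list W) : W -> R := fun y => f y * ind L y.
Definition Aser {W} (q : W -> W -> R) (L : list W) (c t : R) (g : W -> R) (x : W) (j : nat) : R :=
  t ^ j * Kp q L c g j x / INR (fact j).
Definition Bser (c t : R) (m : nat) : R := (- c * t) ^ m / INR (fact m).

Lemma hL_out {W} (f : W -> R) L x : ~ In x L -> hL f L x = 0.
Proof. intros H. unfold hL. destruct (ind_cases L x) as [[E F]|[E F]]; [tauto|]. rewrite E; ring. Qed.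

Lemma PS_term_cauchy {W} (q : W -> W -> R) (Hg : is_graph q) L c t f x k :
  PS_term q L t f x k = sum_f_R0 (fun j => Aser q L c t (hL f L) x j * Bser c t (k - j)) k.
Proof.
  unfold PS_term. change (Nat.iter k (lap (qrestr q L)) (fun y => f y * ind L y)) with (Dk q L (hL f L) k).
  rewrite (Dk_binom q Hg L c (hL f L) (hL_out f L)).
  replace (t ^ k * sum_f_R0 (fun j => C k j * (- c) ^ (k - j) * Kp q L c (hL f L) j x) k / INR (fact k))
    with ((t ^ k / INR (fact k)) * sum_f_R0 (fun j => C k j * (- c) ^ (k - j) * Kp q L c (hL f L) j x) k)
    by (field; apply INR_fact_neq_0).
  rewrite <- sum_scal_l. apply sum_eq. intros j Hj.
  unfold Aser, Bser, C. rewrite Rpow_mult_distr.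
  assert (E : t ^ k = t ^ j * t ^ (k - j)) by (rewrite <- pow_add; f_equal; lia). rewrite E.
  field. split; [apply INR_fact_neq_0|]. split; apply INR_fact_neq_0.
Qed.

From Coquelicot Require Import Coquelicot.
Import ListNotations.
Import Defs.
Open Scope R_scope.

Lemma exp_series x : is_series (fun n => x ^ n / INR (fact n)) (exp x).
Proof.
  generalize (is_exp_Reals x). unfold is_pseries. apply is_series_ext.
  intros n. rewrite pow_n_pow. unfold scal; simpl. unfold mult; simpl. unfold Rdiv. ring.
Qed.

Lemma series_le_gen a b : ex_series a -> ex_series b -> (forall n, a n <= b n) -> Series a <= Series b.
Proof.
  intros Ea Eb H.
  apply Series_correct, is_series_Reals in Ea. apply Series_correct, is_series_Reals in Eb.
  assert (Ua : Un_cv (fun n => sum_f_R0 a n) (Series a)) by exact Ea.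
  assert (Ub : Un_cv (fun n => sum_f_R0 b n) (Series b)) by exact Eb.
  apply is_lim_seq_Reals in Ua. apply is_lim_seq_Reals in Ub.
  generalize (is_lim_seq_le _ _ _ _ (fun n => sum_Rle a b n (fun i _ => H i)) Ua Ub). simpl; auto.
Qed.

Section G3.
Context {W : Type} (q : W -> W -> R) (Hg : is_graph q).

Lemma deg_nonneg x : 0 <= fsum (q x).
Proof.
  destruct (nbr_ex q Hg x) as [l [N C]]. rewrite (fsum_q1 q l x); auto.
  rewrite <- (lsum_zero l (fun _ => 0)) by auto. apply lsum_le. intros; apply (proj1 Hg).
Qed.

Lemma Kop_bound L c g B x : 0 <= c -> (forall y, In y L -> fsum (q y) <= c) -> (forall y, Rabs (g y) <= B) ->
  Rabs (Kop q L c g x) <= c * B.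
Proof.
  intros c0 Hc HB. assert (B0 : 0 <= B) by (eapply Rle_trans; [apply Rabs_pos|apply (HB x)]).
  unfold Kop. destruct (ind_cases L x) as [[E F]|[E F]]; rewrite E.
  - destruct (nbr_ex q Hg x) as [l [N C]]. rewrite (fsum_q q l x), (fsum_q1 q l x) in *; auto.
    specialize (Hc x F). rewrite (fsum_q1 q l x) in Hc; auto.
    assert (D0 := deg_nonneg x). rewrite (fsum_q1 q l x) in D0; auto.
    assert (H1 : Rabs (lsum l (fun y => q x y * g y)) <= lsum l (q x) * B).
    { eapply Rle_trans. apply lsum_abs. rewrite Rmult_comm, <- lsum_scal. apply lsum_le.
      intros y _. rewrite Rabs_mult, Rabs_pos_eq by apply (proj1 Hg).
      rewrite Rmult_comm. apply Rmult_le_compat_r; auto. apply (proj1 Hg). }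
    assert (H2 : Rabs ((c - lsum l (q x)) * g x) <= (c - lsum l (q x)) * B).
    { rewrite Rabs_mult, (Rabs_pos_eq (c - _)) by lra. apply Rmult_le_compat_l; auto. lra. }
    rewrite Rmult_1_l. eapply Rle_trans. apply Rabs_triang. lra.
  - rewrite Rmult_0_l, Rabs_R0. nra.
Qed.

Lemma Kp_bound L c g B : 0 <= c -> (forall y, In y L -> fsum (q y) <= c) -> (forall y, Rabs (g y) <= B) ->
  forall j x, Rabs (Kp q L c g j x) <= c ^ j * B.
Proof.
  intros c0 Hc HB j. induction j; intros x.
  - simpl. rewrite Rmult_1_l. apply HB.
  - rewrite Kp_S. simpl. rewrite Rmult_assoc. apply Kop_bound; auto.
Qed.

Lemma norm_R (x : R) : norm x = Rabs x.
Proof. reflexivity. Qed.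

Lemma exp_ex_scal B x : ex_series (fun n => B * (x ^ n / INR (fact n))).
Proof.
  exists (scal B (exp x)). apply (is_series_scal_l B _ _ (exp_series x)).
Qed.

Lemma Aser_abs_ex L c t g B x : 0 <= t -> 0 <= c -> (forall y, In y L -> fsum (q y) <= c) ->
  (forall y, Rabs (g y) <= B) -> ex_series (fun n => Rabs (Aser q L c t g x n)).
Proof.
  intros t0 c0 Hc HB.
  apply (@ex_series_le R_AbsRing R_CompleteNormedModule _ (fun n => B * ((c * t) ^ n / INR (fact n)))); [|apply exp_ex_scal].
  intros n. rewrite norm_R, Rabs_Rabsolu. unfold Aser.
  unfold Rdiv. rewrite !Rabs_mult. rewrite (Rabs_pos_eq (/ _)).
  2:{ apply Rlt_le, Rinv_0_lt_compat, INR_fact_lt_0. }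
  rewrite <- RPow_abs, (Rabs_pos_eq t) by auto. rewrite Rpow_mult_distr.
  generalize (Kp_bound L c g B c0 Hc HB n x). intros K.
  assert (0 < / INR (fact n)) by (apply Rinv_0_lt_compat, INR_fact_lt_0).
  assert (0 <= t ^ n) by (apply pow_le; auto).
  replace (B * (c ^ n * t ^ n * / INR (fact n))) with (t ^ n * (c ^ n * B) * / INR (fact n)) by ring.
  apply Rmult_le_compat_r; [lra|]. apply Rmult_le_compat_l; auto.
Qed.

Lemma Aser_ex L c t g B x : 0 <= t -> 0 <= c -> (forall y, In y L -> fsum (q y) <= c) ->
  (forall y, Rabs (g y) <= B) -> ex_series (Aser q L c t g x).
Proof. intros; apply ex_series_Rabs; eapply Aser_abs_ex; eauto. Qed.

Lemma Bser_abs_ex c t : 0 <= t -> 0 <= c -> ex_series (fun n => Rabs (Bser c t n)).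
Proof.
  intros t0 c0. exists (exp (c * t)). generalize (exp_series (c * t)). apply is_series_ext.
  intros n. unfold Bser, Rdiv. rewrite Rabs_mult, <- RPow_abs, (Rabs_pos_eq (/ _)).
  2:{ apply Rlt_le, Rinv_0_lt_compat, INR_fact_lt_0. }
  f_equal. f_equal. rewrite Rabs_left1 by nra. ring.
Qed.

Lemma hL_bound (f : W -> R) L M : (forall y, Rabs (f y) <= M) -> forall y, Rabs (hL f L y) <= M.
Proof.
  intros H y. unfold hL. destruct (ind_cases L y) as [[E F]|[E F]]; rewrite E.
  rewrite Rmult_1_r; auto. rewrite Rmult_0_r, Rabs_R0. eapply Rle_trans; [apply Rabs_pos|apply (H y)].
Qed.

Lemma PS_repr L c t f M x : 0 <= t -> 0 <= c -> (forall y, In y L -> fsum (q y) <= c) ->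
  (forall y, Rabs (f y) <= M) ->
  PS q L t f x = exp (- c * t) * Series (Aser q L c t (hL f L) x).
Proof.
  intros t0 c0 Hc HM.
  assert (HB := hL_bound f L M HM).
  assert (Ea := Aser_ex L c t (hL f L) M x t0 c0 Hc HB).
  generalize (is_series_mult _ (Bser c t) _ _ (Series_correct _ Ea) (exp_series (- c * t))
     (Aser_abs_ex L c t (hL f L) M x t0 c0 Hc HB) (Bser_abs_ex c t t0 c0)).
  intros HS. apply is_series_Reals in HS.
  assert (U : Un_cv (fun N => sum_f_R0 (PS_term q L t f x) N) (Series (Aser q L c t (hL f L) x) * exp (- c * t))).
  { rewrite (functional_extensionality (PS_term q L t f x) (fun k => sum_f_R0 (fun j => Aser q L c t (hL f L) x j * Bser c t (k - j)) k)).
    exact HS. intros k. apply PS_term_cauchy; auto. }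
  unfold PS. destruct (excluded_middle_informative _) as [H|H].
  - destruct (constructive_indefinite_description _ H) as [l Hl]. simpl.
    rewrite (UL_sequence _ _ _ Hl U). ring.
  - exfalso; apply H; eauto.
Qed.
End G3.


Lemma Series_ge0 a : ex_series a -> (forall n, 0 <= a n) -> 0 <= Series a.
Proof.
  intros E H. replace 0 with (Series (fun n => 0 * a n)).
  apply series_le_gen; auto. exists (0 * Series a). apply (@is_series_scal_l R_AbsRing R_NormedModule 0 a (Series a)), Series_correct, E.
  intros; rewrite Rmult_0_l; auto.
  rewrite Series_scal_l; ring.
Qed.

Section G4.
Context {W : Type} (q : W -> W -> R) (Hg : is_graph q).

Lemma Kop_in L c g s : In s L -> Kop q L c g s = fsum (fun y => q s y * g y) + (c - fsum (q s)) * g s.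
Proof. intros H. unfold Kop. destruct (ind_cases L s) as [[E F]|[E F]]; [|tauto]. rewrite E; ring. Qed.

Lemma Kop_mono L c g h s : (forall y, In y L -> fsum (q y) <= c) -> (forall y, g y <= h y) ->
  Kop q L c g s <= Kop q L c h s.
Proof.
  intros Hc H. destruct (ind_cases L s) as [[E F]|[E F]].
  - rewrite !Kop_in by auto. destruct (nbr_ex q Hg s) as [l [N C]].
    rewrite !(fsum_q q l s); auto. specialize (Hc s F).
    apply Rplus_le_compat. apply lsum_le. intros y _. apply Rmult_le_compat_l; auto. apply (proj1 Hg).
    apply Rmult_le_compat_l; auto. lra.
  - rewrite !Kop_out by auto. lra.
Qed.

Lemma Kp_super L c g (psi : nat -> W -> R) : (forall y, In y L -> fsum (q y) <= c) ->
  (forall k y, 0 <= psi k y) -> (forall y, g y <= psi 0%nat y) ->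
  (forall k s, In s L -> fsum (fun y => q s y * psi k y) + (c - fsum (q s)) * psi k s <= psi (S k) s) ->
  forall k s, Kp q L c g k s <= psi k s.
Proof.
  intros Hc H0 Hi Hs k. induction k; intros s; [apply Hi|].
  rewrite Kp_S. eapply Rle_trans. apply (Kop_mono L c _ (psi k)); auto.
  destruct (ind_cases L s) as [[E F]|[E F]].
  - rewrite Kop_in; auto.
  - rewrite Kop_out; auto.
Qed.

Lemma Kp_sub L c g (phi : nat -> W -> R) : (forall y, In y L -> fsum (q y) <= c) ->
  (forall y, phi 0%nat y <= g y) -> (forall k s, ~ In s L -> phi (S k) s <= 0) ->
  (forall k s, In s L -> phi (S k) s <= fsum (fun y => q s y * phi k y) + (c - fsum (q s)) * phi k s) ->
  forall k s, phi k s <= Kp q L c g k s.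
Proof.
  intros Hc Hi Ho Hs k. induction k; intros s; [apply Hi|].
  rewrite Kp_S. eapply Rle_trans. 2: apply (Kop_mono L c (phi k)); auto.
  destruct (ind_cases L s) as [[E F]|[E F]].
  - rewrite Kop_in; auto.
  - rewrite Kop_out; auto.
Qed.

Lemma Kp_nonneg L c g : (forall y, In y L -> fsum (q y) <= c) -> (forall y, 0 <= g y) ->
  forall k s, 0 <= Kp q L c g k s.
Proof.
  intros Hc H0 k s. apply (Kp_sub L c g (fun _ _ => 0)); auto; intros; try lra.
  match goal with |- context [fsum ?F] => rewrite (fsum_eq [] F) end. unfold lsum; simpl; lra. constructor.
  intros y Hy; exfalso; apply Hy; ring.
Qed.

Lemma fsum_const s K : fsum (fun y => q s y * K) = K * fsum (q s).
Proof.
  destruct (nbr_ex q Hg s) as [l [N C]]. rewrite (fsum_q q l s), (fsum_q1 q l s); auto.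
  rewrite <- lsum_scal. apply lsum_ext; intros; ring.
Qed.

Lemma Kp_le_const L c g N : 0 <= c -> (forall y, In y L -> fsum (q y) <= c) -> 0 <= N -> (forall y, g y <= N) ->
  forall k s, Kp q L c g k s <= N * c ^ k.
Proof.
  intros c0 Hc N0 HN k s. apply (Kp_super L c g (fun k _ => N * c ^ k)); auto.
  - intros; apply Rmult_le_pos; auto. apply pow_le; auto.
  - intros; simpl; rewrite Rmult_1_r; auto.
  - intros k' s' _. rewrite fsum_const. simpl. lra.
Qed.

Definition cdeg (L : list W) : R := lsum L (fun y => fsum (q y)).

Lemma cdeg_nonneg L : 0 <= cdeg L.
Proof.
  unfold cdeg. rewrite <- (lsum_zero L (fun _ => 0)) by auto. apply lsum_le. intros; apply deg_nonneg; auto; apply Hg.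
Qed.

Lemma cdeg_ge L y : In y L -> fsum (q y) <= cdeg L.
Proof.
  unfold cdeg. induction L; simpl; [tauto|]. intros [E|H].
  - subst. rewrite lsum_cons. assert (0 <= lsum L (fun y => fsum (q y))).
    { rewrite <- (lsum_zero L (fun _ => 0)) by auto. apply lsum_le. intros; apply deg_nonneg; auto; apply Hg. }
    lra.
  - rewrite lsum_cons. generalize (deg_nonneg q Hg a). specialize (IHL H). lra.
Qed.

Definition bnd (g : W -> R) := exists M, forall y, Rabs (g y) <= M.

Lemma ind_in (L : list W) y : In y L -> ind L y = 1.
Proof. intros H. destruct (ind_cases L y) as [[E F]|[E F]]; auto; tauto. Qed.

Lemma PS_mono_le L L' t g x : 0 <= t -> incl L L' -> bnd g -> (forall y, 0 <= g y) ->
  PS q L t g x <= PS q L' t g x.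
Proof.
  intros t0 I [M HM] g0. set (c := cdeg L').
  assert (c0 : 0 <= c) by apply cdeg_nonneg.
  assert (Hc' : forall y, In y L' -> fsum (q y) <= c) by (intros; apply cdeg_ge; auto).
  assert (Hc : forall y, In y L -> fsum (q y) <= c) by auto.
  rewrite (PS_repr q Hg L c t g M x), (PS_repr q Hg L' c t g M x); auto.
  apply Rmult_le_compat_l. apply Rlt_le, exp_pos.
  assert (h0 : forall L0 y, 0 <= hL g L0 y).
  { intros L0 y. unfold hL. destruct (ind_cases L0 y) as [[E F]|[E F]]; rewrite E; try lra. rewrite Rmult_1_r; auto. }
  apply series_le_gen; try (eapply Aser_ex; eauto using hL_bound).
  intros n. unfold Aser. unfold Rdiv. rewrite !(Rmult_comm (t ^ n)), !Rmult_assoc.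
  apply Rmult_le_compat_r. apply Rmult_le_pos; [apply pow_le; auto | apply Rlt_le, Rinv_0_lt_compat, INR_fact_lt_0].
  apply (Kp_super L c (hL g L) (fun k => Kp q L' c (hL g L') k)); auto.
  - intros; apply Kp_nonneg; auto.
  - intros y. simpl. unfold hL. destruct (ind_cases L y) as [[E F]|[E F]]; rewrite E.
    rewrite (ind_in L' y (I y F)). lra. generalize (h0 L' y). unfold hL. lra.
  - intros k s Hs. rewrite Kp_S, Kop_in; auto. lra.
Qed.

Lemma PS_bounds L t g N x : 0 <= t -> 0 <= N -> (forall y, 0 <= g y <= N) ->
  0 <= PS q L t g x <= N.
Proof.
  intros t0 N0 HN. set (c := cdeg L).
  assert (c0 : 0 <= c) by apply cdeg_nonneg.
  assert (Hc : forall y, In y L -> fsum (q y) <= c) by (intros; apply cdeg_ge; auto).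
  assert (HM : forall y, Rabs (g y) <= N) by (intros y; specialize (HN y); rewrite Rabs_pos_eq; lra).
  rewrite (PS_repr q Hg L c t g N x); auto.
  assert (h0 : forall y, 0 <= hL g L y <= N).
  { intros y. unfold hL. destruct (ind_cases L y) as [[E F]|[E F]]; rewrite E. rewrite Rmult_1_r; auto. specialize (HN y); lra. }
  assert (Ex := Aser_ex q Hg L c t (hL g L) N x t0 c0 Hc (hL_bound g L N HM)).
  assert (Tn : forall n, 0 <= Aser q L c t (hL g L) x n).
  { intros n. unfold Aser. apply Rmult_le_pos. apply Rmult_le_pos. apply pow_le; auto.
    apply Kp_nonneg; auto. intros; apply h0. apply Rlt_le, Rinv_0_lt_compat, INR_fact_lt_0. }
  split.
  - apply Rmult_le_pos. apply Rlt_le, exp_pos. apply Series_ge0; auto.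
  - assert (Hs : is_series (fun n => N * ((c * t) ^ n / INR (fact n))) (N * exp (c * t))).
    { apply (@is_series_scal_l R_AbsRing R_NormedModule N _ (exp (c*t))), exp_series. }
    assert (Series (Aser q L c t (hL g L) x) <= N * exp (c * t)).
    { rewrite <- (is_series_unique _ _ Hs). apply series_le_gen; auto. eexists; eauto.
      intros n. unfold Aser. rewrite Rpow_mult_distr.
      assert (K := Kp_le_const L c (hL g L) N c0 Hc N0 (fun y => proj2 (h0 y)) n x).
      assert (0 <= t ^ n) by (apply pow_le; auto).
      assert (0 < / INR (fact n)) by (apply Rinv_0_lt_compat, INR_fact_lt_0).
      unfold Rdiv. replace (N * (c ^ n * t ^ n * / INR (fact n))) with (t ^ n * (N * c ^ n) * / INR (fact n)) by ring.
      apply Rmult_le_compat_r; [lra|]. apply Rmult_le_compat_l; auto. }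
    assert (0 < exp (- c * t)) by apply exp_pos.
    apply Rle_trans with (exp (- c * t) * (N * exp (c * t))). apply Rmult_le_compat_l; lra.
    replace (exp (- c * t) * (N * exp (c * t))) with (N * (exp (- c * t) * exp (c * t))) by ring.
    rewrite <- exp_plus. replace (- c * t + c * t) with 0 by ring. rewrite exp_0. lra.
Qed.

Lemma PS_lin L t g h a x : 0 <= t -> bnd g -> bnd h ->
  PS q L t (fun y => g y + a * h y) x = PS q L t g x + a * PS q L t h x.
Proof.
  intros t0 [Mg Hmg] [Mh Hmh]. set (c := cdeg L).
  assert (c0 : 0 <= c) by apply cdeg_nonneg.
  assert (Hc : forall y, In y L -> fsum (q y) <= c) by (intros; apply cdeg_ge; auto).
  assert (Hm : forall y, Rabs (g y + a * h y) <= Mg + Rabs a * Mh).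
  { intros y. eapply Rle_trans. apply Rabs_triang. rewrite Rabs_mult.
    apply Rplus_le_compat; auto. apply Rmult_le_compat_l; auto. apply Rabs_pos. }
  rewrite (PS_repr q Hg L c t _ _ x t0 c0 Hc Hm), (PS_repr q Hg L c t g Mg x), (PS_repr q Hg L c t h Mh x); auto.
  assert (E : hL (fun y => g y + a * h y) L = fun y => 1 * hL g L y + a * hL h L y).
  { apply functional_extensionality; intros y; unfold hL; ring. }
  rewrite E.
  rewrite (Series_ext _ (fun n => Aser q L c t (hL g L) x n + a * Aser q L c t (hL h L) x n)).
  2:{ intros n. unfold Aser. rewrite Kp_lin; auto. unfold Rdiv; ring. }
  rewrite Series_plus, Series_scal_l. ring.
  eapply Aser_ex; eauto using hL_bound.
  apply (ex_series_scal_l (K:=R_AbsRing) (V:=R_NormedModule) a). eapply Aser_ex; eauto using hL_bound.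
Qed.
End G4.


Lemma exh_mono {W} (S : nat -> list W) : exhaustion S -> forall i j, (i <= j)%nat -> incl (S i) (S j).
Proof.
  intros [H _] i j Hij. induction Hij. apply incl_refl.
  eapply incl_tran; eauto. intros x Hx; apply H; auto.
Qed.

Lemma exh_cover {W} (S : nat -> list W) : exhaustion S -> forall l : list W, exists i, incl l (S i).
Proof.
  intros E l. induction l as [|a l IH].
  - exists 0%nat. intros x [].
  - destruct IH as [i Hi]. destruct ((proj2 E) a) as [j Hj].
    exists (Nat.max i j). intros x [<-|Hx].
    + apply (exh_mono S E j); auto; lia.
    + apply (exh_mono S E i); auto; lia.
Qed.

Lemma CV_const a : Un_cv (fun _ => a) a.
Proof. intros e He. exists 0%nat. intros. unfold Rdist. rewrite Rminus_diag, Rabs_R0. lra. Qed.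

Section G5.
Context {W : Type} (q : W -> W -> R) (Hg : is_graph q) (t : R) (Ht : 0 <= t).

Definition is_supPS (g : W -> R) (x : W) (Ls : R) : Prop :=
  (forall L, PS q L t g x <= Ls) /\ (forall e, 0 < e -> exists L, Ls - e < PS q L t g x).

Lemma sup_PS g N x : 0 <= N -> (forall y, 0 <= g y <= N) -> {Ls | is_supPS g x Ls}.
Proof.
  intros N0 HN.
  destruct (completeness (fun r => exists L, r = PS q L t g x)) as [m [Hub Hl]].
  - exists N. intros r [L ->]. apply (PS_bounds q Hg L t g N x); auto.
  - exists (PS q [] t g x). eauto.
  - exists m. split.
    + intros L. apply Hub. eauto.
    + intros e He. apply not_all_not_ex. intros Hn.
      assert (m <= m - e). { apply Hl. intros r [L ->]. specialize (Hn L). lra. }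
      lra.
Qed.

Lemma conv_sup S g N x Ls : exhaustion S -> 0 <= N -> (forall y, 0 <= g y <= N) -> is_supPS g x Ls ->
  Un_cv (fun i => PS q (S i) t g x) Ls.
Proof.
  intros E N0 HN [H1 H2] e He. destruct (H2 e He) as [L0 HL0].
  destruct (exh_cover S E L0) as [i0 Hi0]. exists i0. intros n Hn.
  assert (PS q L0 t g x <= PS q (S n) t g x).
  { apply PS_mono_le; auto. eapply incl_tran; eauto. apply exh_mono; auto.
    exists N. intros y. specialize (HN y). rewrite Rabs_pos_eq; lra. intros y; apply HN. }
  specialize (H1 (S n)). unfold Rdist. rewrite Rabs_left1 by lra. lra.
Qed.

Lemma Pt_char f x l : (exists S : nat -> list W, exhaustion S) ->
  (forall S, exhaustion S -> Un_cv (fun i => PS q (S i) t f x) l) -> Pt q t f x = l.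
Proof.
  intros [S0 E0] H. unfold Pt. destruct (excluded_middle_informative _) as [H'|H'].
  - destruct (constructive_indefinite_description _ H') as [l' Hl']. simpl.
    apply (UL_sequence _ _ _ (Hl' S0 E0) (H S0 E0)).
  - exfalso; apply H'; eauto.
Qed.

Lemma Vside f M x Lp L1 : (forall y, Rabs (f y) <= M) ->
  is_supPS (fun y => f y + M) x Lp -> is_supPS (fun _ => 1) x L1 ->
  forall S, exhaustion S -> Un_cv (fun i => PS q (S i) t f x) (Lp - M * L1).
Proof.
  intros HM Hp H1 S E.
  assert (M0 : 0 <= M) by (eapply Rle_trans; [apply Rabs_pos|]; apply (HM x)).
  assert (Hb : forall y, 0 <= f y + M <= M + M).
  { intros y. specialize (HM y). unfold Rabs in HM; destruct (Rcase_abs (f y)); lra. }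
  assert (E1 : forall L, PS q L t f x = PS q L t (fun y => f y + M) x + (- M) * PS q L t (fun _ => 1) x).
  { intros L. rewrite <- PS_lin; auto.
    f_equal. apply functional_extensionality; intros; ring.
    exists (M + M). intros y; rewrite Rabs_pos_eq; apply Hb.
    exists 1. intros; rewrite Rabs_R1; lra. }
  rewrite (functional_extensionality (fun i => PS q (S i) t f x)
     (fun i => PS q (S i) t (fun y => f y + M) x + (- M) * PS q (S i) t (fun _ => 1) x)) by auto.
  replace (Lp - M * L1) with (Lp + (- M) * L1) by ring.
  apply CV_plus. apply (conv_sup S _ (M + M)); auto. lra.
  apply CV_mult. apply CV_const. apply (conv_sup S _ 1); auto. lra. intros; lra.
Qed.
End G5.


Lemma Aser_le {W1 W2} (q1 : W1 -> W1 -> R) L1 g1 x1 (q2 : W2 -> W2 -> R) L2 g2 x2 c t n : 0 <= t ->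
  Kp q1 L1 c g1 n x1 <= Kp q2 L2 c g2 n x2 -> Aser q1 L1 c t g1 x1 n <= Aser q2 L2 c t g2 x2 n.
Proof.
  intros t0 H. unfold Aser, Rdiv. apply Rmult_le_compat_r. apply Rlt_le, Rinv_0_lt_compat, INR_fact_lt_0.
  apply Rmult_le_compat_l; auto. apply pow_le; auto.
Qed.

Lemma Kp_outL {W} (q : W -> W -> R) L c g k y : ~ In y L -> Kp q L c (hL g L) k y = 0.
Proof. intros H. destruct k. apply hL_out; auto. rewrite Kp_S. apply Kop_out; auto. Qed.

Lemma hL_in {W} (g : W -> R) L y : In y L -> hL g L y = g y.
Proof. intros H. unfold hL. rewrite ind_in; auto; ring. Qed.

Lemma hL_range {W} (g : W -> R) L N y : 0 <= N -> (forall y, 0 <= g y <= N) -> 0 <= hL g L y <= N.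
Proof.
  intros N0 H. unfold hL. destruct (ind_cases L y) as [[E F]|[E F]]; rewrite E.
  rewrite Rmult_1_r; auto. lra.
Qed.

Lemma range_bnd {W} (g : W -> R) N : (forall y, 0 <= g y <= N) -> forall y, Rabs (g y) <= N.
Proof. intros H y. specialize (H y). rewrite Rabs_pos_eq; lra. Qed.

Section G6.
Context {V W : Type} (q : V -> V -> R) (Hg : is_graph q) (qt : W -> W -> R) (Hgt : is_graph qt)
  (t : R) (Ht : 0 <= t).

Lemma transfer (pi : W -> V) (HC : forall h s, lap qt (fun p => h (pi p)) s = lap q h (pi s)) h s :
  fsum (fun y => qt s y * h (pi y)) =
  fsum (fun y => q (pi s) y * h y) - fsum (q (pi s)) * h (pi s) + fsum (qt s) * h (pi s).
Proof.
  generalize (HC h s). rewrite (lap_expand qt Hgt), (lap_expand q Hg). lra.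
Qed.

Lemma PS_upper (pi2 : W -> V) (HC2 : forall h s, lap qt (fun p => h (pi2 p)) s = lap q h (pi2 s))
  g N Lt s : 0 <= N -> (forall y, 0 <= g y <= N) ->
  PS qt Lt t (fun p => g (pi2 p)) s <= PS q (map pi2 Lt) t g (pi2 s).
Proof.
  intros N0 HN. set (T := map pi2 Lt). set (c := cdeg qt Lt + cdeg q T).
  assert (C1 := cdeg_nonneg qt Hgt Lt). assert (C2 := cdeg_nonneg q Hg T).
  assert (c0 : 0 <= c) by (unfold c; lra).
  assert (Hc1 : forall y, In y Lt -> fsum (qt y) <= c).
  { intros y Hy. generalize (cdeg_ge qt Hgt Lt y Hy). unfold c; lra. }
  assert (Hc2 : forall y, In y T -> fsum (q y) <= c).
  { intros y Hy. generalize (cdeg_ge q Hg T y Hy). unfold c; lra. }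
  assert (HN' : forall p, 0 <= g (pi2 p) <= N) by auto.
  rewrite (PS_repr qt Hgt Lt c t _ N s Ht c0 Hc1 (range_bnd _ _ HN')).
  rewrite (PS_repr q Hg T c t _ N (pi2 s) Ht c0 Hc2 (range_bnd _ _ HN)).
  apply Rmult_le_compat_l. apply Rlt_le, exp_pos.
  apply series_le_gen.
  eapply (Aser_ex qt Hgt); eauto. apply hL_bound, (range_bnd _ _ HN').
  eapply (Aser_ex q Hg); eauto. apply hL_bound, (range_bnd _ _ HN).
  intros n. apply Aser_le; auto. revert s. apply (Kp_super qt Hgt Lt c _ (fun k p => Kp q T c (hL g T) k (pi2 p))); auto.
  - intros; apply (Kp_nonneg q Hg); auto. intros; apply (hL_range g T N); auto.
  - intros y. simpl. unfold hL. destruct (ind_cases Lt y) as [[E F]|[E F]]; rewrite E.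
    rewrite (ind_in T (pi2 y)). lra. apply in_map; auto.
    generalize (proj1 (hL_range g T N (pi2 y) N0 HN)). unfold hL. lra.
  - intros k p Hp. rewrite (transfer pi2 HC2 (Kp q T c (hL g T) k) p).
    rewrite Kp_S, Kop_in. lra. apply in_map; auto.
Qed.

Lemma PS_lower (pi1 pi2 : W -> V)
  (HC1 : forall h s, lap qt (fun p => h (pi1 p)) s = lap q h (pi1 s))
  (HC2 : forall h s, lap qt (fun p => h (pi2 p)) s = lap q h (pi2 s))
  T' T R (HR : forall s, In s R <-> In (pi1 s) T' /\ In (pi2 s) T)
  g N s : 0 <= N -> (forall y, 0 <= g y <= N) ->
  PS q T t g (pi2 s) - N + N * PS q T' t (fun _ => 1) (pi1 s) <= PS qt R t (fun p => g (pi2 p)) s.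
Proof.
  intros N0 HN. set (c := cdeg qt R + cdeg q T + cdeg q T').
  assert (C1 := cdeg_nonneg qt Hgt R). assert (C2 := cdeg_nonneg q Hg T). assert (C3 := cdeg_nonneg q Hg T').
  assert (c0 : 0 <= c) by (unfold c; lra).
  assert (Hc1 : forall y, In y R -> fsum (qt y) <= c).
  { intros y Hy. generalize (cdeg_ge qt Hgt R y Hy). unfold c; lra. }
  assert (Hc2 : forall y, In y T -> fsum (q y) <= c).
  { intros y Hy. generalize (cdeg_ge q Hg T y Hy). unfold c; lra. }
  assert (Hc3 : forall y, In y T' -> fsum (q y) <= c).
  { intros y Hy. generalize (cdeg_ge q Hg T' y Hy). unfold c; lra. }
  assert (HN' : forall p, 0 <= g (pi2 p) <= N) by auto.
  assert (H1 : forall y : V, 0 <= (fun _ => 1) y <= 1) by (intros; lra).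
  rewrite (PS_repr qt Hgt R c t _ N s Ht c0 Hc1 (range_bnd _ _ HN')).
  rewrite (PS_repr q Hg T c t _ N (pi2 s) Ht c0 Hc2 (range_bnd _ _ HN)).
  rewrite (PS_repr q Hg T' c t _ 1 (pi1 s) Ht c0 Hc3 (range_bnd _ _ H1)).
  set (a := fun k => Kp q T c (hL g T) k).
  set (b := fun k => Kp q T' c (hL (fun _ => 1) T') k).
  assert (a0 : forall k y, 0 <= a k y) by (intros; apply (Kp_nonneg q Hg); auto; intros; apply (hL_range g T N); auto).
  assert (aN : forall k y, a k y <= N * c ^ k) by (intros; apply (Kp_le_const q Hg); auto; intros; apply (hL_range g T N); auto).
  assert (b0 : forall k y, 0 <= b k y) by (intros; apply (Kp_nonneg q Hg); auto; intros; apply (proj1 (hL_range _ T' 1 _ ltac:(lra) H1))).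
  assert (b1 : forall k y, b k y <= 1 * c ^ k) by (intros; apply (Kp_le_const q Hg); auto; try lra; intros; apply (proj2 (hL_range _ T' 1 _ ltac:(lra) H1))).
  set (phi := fun k p => a k (pi2 p) - N * c ^ k + N * b k (pi1 p)).
  assert (Hout : forall k p, ~ In p R -> phi k p <= 0).
  { intros k p Hp. unfold phi.
    destruct (classic (In (pi2 p) T)) as [I2|I2].
    - destruct (classic (In (pi1 p) T')) as [I1|I1]. exfalso; apply Hp, HR; auto.
      unfold b. rewrite Kp_outL by auto. specialize (aN k (pi2 p)). lra.
    - unfold a. rewrite Kp_outL by auto. assert (N * b k (pi1 p) <= N * (1 * c ^ k)) by (apply Rmult_le_compat_l; auto). lra. }
  assert (Hcmp : forall k p, phi k p <= Kp qt R c (hL (fun p => g (pi2 p)) R) k p).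
  { apply (Kp_sub qt Hgt R c _ phi); auto.
    - intros y. destruct (classic (In y R)) as [I|I].
      + destruct (proj1 (HR y) I) as [I1 I2]. unfold phi, a, b. simpl.
        rewrite !hL_in; auto. lra.
      + rewrite hL_out by auto. apply Hout; auto.
    - intros k p Hp. destruct (proj1 (HR p) Hp) as [I1 I2].
      destruct (nbr_ex qt Hgt p) as [l [Nl Cl]].
      rewrite (fsum_q qt l p); auto.
      rewrite (lsum_ext l _ (fun y => 1 * (qt p y * a k (pi2 y)) + 1 * (N * (qt p y * b k (pi1 y)) + (- N * c ^ k) * qt p y))).
      2:{ intros y _. unfold phi. ring. }
      rewrite !lsum_lin2.
      change (lsum l (fun y => qt p y)) with (lsum l (qt p)).
      rewrite <- !(fsum_q qt l p), <- (fsum_q1 qt l p) by auto.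
      rewrite (transfer pi2 HC2 (a k) p), (transfer pi1 HC1 (b k) p).
      unfold phi, a, b. rewrite !Kp_S. rewrite (Kop_in q T), (Kop_in q T') by auto.
      simpl. lra. }
  assert (EA := Aser_ex qt Hgt R c t _ N s Ht c0 Hc1 (hL_bound _ R N (range_bnd _ _ HN'))).
  assert (Ea := Aser_ex q Hg T c t _ N (pi2 s) Ht c0 Hc2 (hL_bound _ T N (range_bnd _ _ HN))).
  assert (Eb := Aser_ex q Hg T' c t _ 1 (pi1 s) Ht c0 Hc3 (hL_bound _ T' 1 (range_bnd _ _ H1))).
  assert (Ee := exp_series (c * t)).
  set (SA := Series (Aser qt R c t (hL (fun p => g (pi2 p)) R) s)).
  set (Sa := Series (Aser q T c t (hL g T) (pi2 s))).
  set (Sb := Series (Aser q T' c t (hL (fun _ => 1) T') (pi1 s))).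
  assert (Hser : Sa + (- N) * exp (c * t) + N * Sb <= SA).
  { set (u := fun n => Aser q T c t (hL g T) (pi2 s) n + (- N) * ((c * t) ^ n / INR (fact n))
                      + N * Aser q T' c t (hL (fun _ => 1) T') (pi1 s) n).
    assert (Hu : is_series u (Sa + (- N) * exp (c * t) + N * Sb)).
    { apply (@is_series_plus R_AbsRing R_NormedModule). apply (@is_series_plus R_AbsRing R_NormedModule).
      apply Series_correct; auto.
      apply (@is_series_scal_l R_AbsRing R_NormedModule); auto.
      apply (@is_series_scal_l R_AbsRing R_NormedModule). apply Series_correct; auto. }
    rewrite <- (is_series_unique _ _ Hu).
    apply series_le_gen. eexists; eauto. auto.
    intros n. specialize (Hcmp n s). unfold phi, a, b in Hcmp. unfold u, Aser.
    rewrite Rpow_mult_distr. unfold Rdiv.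
    assert (0 <= t ^ n) by (apply pow_le; auto).
    assert (0 < / INR (fact n)) by (apply Rinv_0_lt_compat, INR_fact_lt_0).
    match goal with |- ?X <= _ => replace X with (t ^ n * (Kp q T c (hL g T) n (pi2 s) - N * c ^ n +
       N * Kp q T' c (hL (fun _ => 1) T') n (pi1 s)) * / INR (fact n)) by ring end.
    apply Rmult_le_compat_r; [lra|]. apply Rmult_le_compat_l; auto. }
  assert (Ex : exp (- c * t) * exp (c * t) = 1).
  { rewrite <- exp_plus. replace (- c * t + c * t) with 0 by ring. apply exp_0. }
  assert (0 < exp (- c * t)) by apply exp_pos.
  apply Rle_trans with (exp (- c * t) * (Sa + (- N) * exp (c * t) + N * Sb)).
  - replace (exp (- c * t) * (Sa + (- N) * exp (c * t) + N * Sb)) with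
      (exp (- c * t) * Sa - N * (exp (- c * t) * exp (c * t)) + N * (exp (- c * t) * Sb)) by ring.
    rewrite Ex. lra.
  - apply Rmult_le_compat_l; lra.
Qed.
End G6.


Section G7.
Context {V W : Type} (q : V -> V -> R) (Hg : is_graph q) (qt : W -> W -> R) (Hgt : is_graph qt)
  (t : R) (Ht : 0 <= t) (pi1 pi2 : W -> V)
  (HC1 : forall h s, lap qt (fun p => h (pi1 p)) s = lap q h (pi1 s))
  (HC2 : forall h s, lap qt (fun p => h (pi2 p)) s = lap q h (pi2 s))
  (HR : forall T' T, exists R, forall s, In s R <-> In (pi1 s) T' /\ In (pi2 s) T)
  (Hsc1 : forall x e, 0 < e -> exists T', 1 - e < PS q T' t (fun _ => 1) x).

Lemma couple_limit g N s Lg : 0 <= N -> (forall y, 0 <= g y <= N) -> is_supPS q t g (pi2 s) Lg ->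
  forall St, exhaustion St -> Un_cv (fun i => PS qt (St i) t (fun p => g (pi2 p)) s) Lg.
Proof.
  intros N0 HN [Hs1 Hs2] St E e He.
  destruct (Hs2 (e / 2)) as [T HT]. lra.
  set (e' := e / (2 * (N + 1))).
  assert (e'0 : 0 < e') by (unfold e'; apply Rdiv_lt_0_compat; lra).
  destruct (Hsc1 (pi1 s) e' e'0) as [T' HT'].
  destruct (HR T' T) as [R HRR].
  destruct (exh_cover St E R) as [i0 Hi0].
  exists i0. intros n Hn.
  assert (HN' : forall p, 0 <= g (pi2 p) <= N) by auto.
  assert (Up : PS qt (St n) t (fun p => g (pi2 p)) s <= Lg).
  { eapply Rle_trans. apply (PS_upper q Hg qt Hgt t Ht pi2 HC2 g N); auto. apply Hs1. }
  assert (Mo : PS qt R t (fun p => g (pi2 p)) s <= PS qt (St n) t (fun p => g (pi2 p)) s).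
  { apply PS_mono_le; auto. eapply incl_tran; eauto. apply exh_mono; auto.
    exists N. apply range_bnd; auto. intros; apply HN'. }
  assert (Lo := PS_lower q Hg qt Hgt t Ht pi1 pi2 HC1 HC2 T' T R HRR g N s N0 HN).
  assert (K : N * (1 - PS q T' t (fun _ => 1) (pi1 s)) <= N * e').
  { apply Rmult_le_compat_l; lra. }
  assert (K2 : N * e' < e / 2).
  { unfold e'. assert (N / (N + 1) < 1).
    { apply (Rmult_lt_reg_r (N + 1)); [lra|]. unfold Rdiv; rewrite Rmult_assoc, Rinv_l by lra. lra. }
    replace (N * (e / (2 * (N + 1)))) with (e / 2 * (N / (N + 1))) by (field; lra).
    assert (0 <= N / (N + 1)) by (unfold Rdiv; apply Rmult_le_pos; [lra|apply Rlt_le, Rinv_0_lt_compat; lra]). nra. }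
  unfold Rdist. rewrite Rabs_left1 by lra. lra.
Qed.

Lemma final_point (HexV : exists S : nat -> list V, exhaustion S) (HexW : exists S : nat -> list W, exhaustion S)
  f M s : (forall y, Rabs (f y) <= M) -> Pt qt t (fun p => f (pi2 p)) s = Pt q t f (pi2 s).
Proof.
  intros HM.
  assert (M0 : 0 <= M) by (eapply Rle_trans; [apply Rabs_pos|]; apply (HM (pi2 s))).
  assert (Hb : forall y, 0 <= f y + M <= M + M).
  { intros y. specialize (HM y). unfold Rabs in HM; destruct (Rcase_abs (f y)); lra. }
  assert (H1 : forall y : V, 0 <= (fun _ => 1) y <= 1) by (intros; lra).
  destruct (sup_PS q Hg t Ht (fun y => f y + M) (M + M) (pi2 s) ltac:(lra) Hb) as [Lp Hp].
  destruct (sup_PS q Hg t Ht (fun _ => 1) 1 (pi2 s) ltac:(lra) H1) as [L1 Hl1].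
  rewrite (Pt_char q t f (pi2 s) (Lp - M * L1) HexV (Vside q Hg t Ht f M (pi2 s) Lp L1 HM Hp Hl1)).
  apply Pt_char; auto. intros St E.
  assert (E1 : forall L, PS qt L t (fun p => f (pi2 p)) s =
     PS qt L t (fun p => f (pi2 p) + M) s + (- M) * PS qt L t (fun _ => 1) s).
  { intros L. rewrite <- PS_lin; auto.
    f_equal. apply functional_extensionality; intros; ring.
    exists (M + M). intros y; rewrite Rabs_pos_eq; apply Hb.
    exists 1. intros; rewrite Rabs_R1; lra. }
  rewrite (functional_extensionality (fun i => PS qt (St i) t (fun p => f (pi2 p)) s)
     (fun i => PS qt (St i) t (fun p => f (pi2 p) + M) s + (- M) * PS qt (St i) t (fun _ => 1) s)) by auto.
  replace (Lp - M * L1) with (Lp + (- M) * L1) by ring.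
  apply CV_plus.
  - apply (couple_limit (fun y => f y + M) (M + M)); auto. lra.
  - apply CV_mult. apply CV_const. apply (couple_limit (fun _ => 1) 1); auto. lra.
Qed.
End G7.


Definition dec_enc {V} (enc : V -> nat) (n : nat) : option V :=
  match excluded_middle_informative (exists x, enc x = n) with
  | left H => Some (proj1_sig (constructive_indefinite_description _ H))
  | right _ => None end.
Definition opt_list {V} (o : option V) : list V := match o with Some x => x :: nil | None => nil end.
Definition exS {V} (enc : V -> nat) (i : nat) : list V := flat_map (fun n => opt_list (dec_enc enc n)) (seq 0 (S i)).

Lemma In_exS {V} (enc : V -> nat) (Hi : forall x y, enc x = enc y -> x = y) x i :
  In x (exS enc i) <-> (enc x <= i)%nat.
Proof.
  unfold exS. rewrite in_flat_map. split.
  - intros [n [Hn Hx]]. apply in_seq in Hn. unfold dec_enc in Hx.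
    destruct (excluded_middle_informative _) as [H|H]; simpl in Hx; [|contradiction].
    destruct (constructive_indefinite_description _ H) as [y Hy]; simpl in Hx.
    destruct Hx as [<-|[]]. lia.
  - intros H. exists (enc x). split. apply in_seq; lia. unfold dec_enc.
    destruct (excluded_middle_informative _) as [H'|H'].
    + destruct (constructive_indefinite_description _ H') as [y Hy]; simpl. left. apply Hi; auto.
    + exfalso; apply H'; eauto.
Qed.

Lemma exh_countable {V} : countable V -> exists S : nat -> list V, exhaustion S.
Proof.
  intros [enc Hi]. exists (exS enc). split.
  - intros i x Hx. apply In_exS in Hx; auto. apply In_exS; auto.
  - intros x. exists (enc x). apply In_exS; auto.
Qed.

Lemma exh_prod {V} (S : nat -> list V) : exhaustion S -> exhaustion (fun i => list_prod (S i) (S i)).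
Proof.
  intros [H1 H2]. split.
  - intros i [a b] Hx. apply in_prod_iff in Hx. apply in_prod_iff. destruct Hx; auto.
  - intros [a b]. destruct (H2 a) as [i Hi]. destruct (H2 b) as [j Hj].
    exists (Nat.max i j). apply in_prod_iff. split.
    apply (exh_mono S (conj H1 H2) i); auto; lia. apply (exh_mono S (conj H1 H2) j); auto; lia.
Qed.

Theorem mainTheorem5 (V : Type) (q : V -> V -> R) (qt : V * V -> V * V -> R)
  (HV : countable V) (Hg : is_graph q) (Hrev : reversible q)
  (Hsc : stoch_complete q) (Hc : coupling_graph q qt)
  (f : V -> R) (Hf : bounded_fun f) (t : R) (Ht : 0 <= t) :
  Pt qt t (tensor (fun _ => 1) f) = tensor (fun _ => 1) (Pt q t f) /\
  Pt qt t (tensor f (fun _ => 1)) = tensor (Pt q t f) (fun _ => 1).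
Proof.
  destruct Hc as [Hgt [HCa HCb]].
  assert (HexV := exh_countable HV).
  assert (HexW : exists S : nat -> list (V * V), exhaustion S).
  { destruct HexV as [S E]. eexists; apply exh_prod; eauto. }
  assert (Hfst : forall h s, lap qt (fun p => h (fst p)) s = lap q h (fst s)).
  { intros h s. replace (fun p : V * V => h (fst p)) with (tensor h (fun _ => 1)).
    rewrite HCa. unfold tensor; ring. apply functional_extensionality; intros; unfold tensor; ring. }
  assert (Hsnd : forall h s, lap qt (fun p => h (snd p)) s = lap q h (snd s)).
  { intros h s. replace (fun p : V * V => h (snd p)) with (tensor (fun _ => 1) h).
    rewrite HCb. unfold tensor; ring. apply functional_extensionality; intros; unfold tensor; ring. }
  assert (Hsc1 : forall x e, 0 < e -> exists T', 1 - e < PS q T' t (fun _ => 1) x).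
  { intros x e He.
    assert (H1 : forall y : V, 0 <= (fun _ => 1) y <= 1) by (intros; lra).
    destruct (sup_PS q Hg t Ht (fun _ => 1) 1 x ltac:(lra) H1) as [L1 Hl1].
    assert (E : Pt q t (fun _ => 1) x = L1).
    { apply Pt_char; auto. intros S ES. apply (conv_sup q Hg t Ht S _ 1); auto. lra. }
    rewrite (Hsc t Ht) in E. subst L1. apply (proj2 Hl1); auto. }
  destruct Hf as [M HM].
  split; apply functional_extensionality; intros s.
  - replace (tensor (fun _ : V => 1) f) with (fun p : V * V => f (snd p))
      by (apply functional_extensionality; intros; unfold tensor; ring).
    unfold tensor. rewrite Rmult_1_l.
    apply (final_point q Hg qt Hgt t Ht fst snd Hfst Hsnd) with (M := M); auto.
    intros T' T. exists (list_prod T' T). intros [a b]. apply in_prod_iff.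
  - replace (tensor f (fun _ : V => 1)) with (fun p : V * V => f (fst p))
      by (apply functional_extensionality; intros; unfold tensor; ring).
    unfold tensor. rewrite Rmult_1_r.
    apply (final_point q Hg qt Hgt t Ht snd fst Hsnd Hfst) with (M := M); auto.
    intros T' T. exists (list_prod T T'). intros [a b]. rewrite in_prod_iff. simpl. tauto.
Qed.
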